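(* If $n\ge 3t+1$, then in every execution of COOL all honest processors output the same message (consistency).
   Context: Setting. $n$ processors indexed by $[1:n]$, pairwise joined by reliable private synchronous channels; recipients know senders. At most $t$ processors are dishonest, controlled by a Byzantine adversary of unbounded computational power knowing all inputs, who may make them deviate arbitrarily (missing values are replaced by a fixed default); the others are honest. Processor $i$ holds an $\ell$-bit initial message $\boldsymbol w_i$. $\phi$ is a default value different from every $\ell$-bit message. Logarithms are base 2. Code. $k=\lfloor t/5\rfloor+1$, $c=\lceil \max\{\ell,(t/5+1)\log(n+1)\}/k\rceil$. Messages are zero-padded to $kc$ bits and viewed in $GF(2^c)^k$. Integers in $[1:n]$ are identified with distinct nonzero elements of $GF(2^c)$; $\boldsymbol h_i\in GF(2^c)^k$ has entries $h_{i,j}=\prod_{p\in[1:k],\,p\ne j}\frac{i-p}{j-p}$ (field arithmetic). COOL (honest processor $i$). Initialization: updated message $\boldsymbol w^{(i)}:=\boldsymbol w_i$, $y^{(i)}_j:=\boldsymbol h_j^{\mathsf T}\boldsymbol w_i$ for $j\in[1:n]$, $u_i(i):=1$. Phase 1. (a) Send $(y^{(i)}_j,y^{(i)}_i)$ to each $j\ne i$. (b) For $j\ne i$, link indicator $u_i(j):=1$ if the pair received from $j$ equals $(y^{(i)}_i,y^{(i)}_j)$, else $0$. Success indicator $s_i:=1$ if $\sum_{j=1}^n u_i(j)\ge n-t$; otherwise $s_i:=0$ and $\boldsymbol w^{(i)}:=\phi$. (c) Send $s_i$ to all; each processor records the indicator received from each $j$ (own for itself) and forms $\mathcal S_1=\{j:s_j=1\}$,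 $\mathcal S_0=\{j:s_j=0\}$ (views may differ). Phase 2. If $s_i=1$: set $u_i(j):=0$ for all $j\in\mathcal S_0$; if now $\sum_j u_i(j)<n-t$, set $s_i:=0$, $\boldsymbol w^{(i)}:=\phi$, and send $s_i=0$ to all. Everyone overwrites recorded indicators with newly received ones and recomputes $\mathcal S_0,\mathcal S_1$. Phase 3. Repeat Phase 2 once more. Vote $v_i:=1$ if the recorded indicators satisfy $\sum_j s_j\ge 2t+1$, else $0$. Run on the votes a deterministic error-free binary Byzantine agreement protocol for $t<n/3$ (e.g. Berman–Garay–Perry or Coan–Welch), which guarantees all honest processors decide, decide equally, and decide the common honest vote when all honest votes agree. If the decision is $0$: set $\boldsymbol w^{(i)}:=\phi$, output $\phi$, stop. Phase 4 (decision 1). If $s_i=0$: replace $y^{(i)}_i$ by the most frequent value (fixed tie-breaking) among the first components of the Phase-1 pairs received from $j\in\mathcal S_1$; send it to each $j\in\mathcal S_0\setminus\{i\}$; with $z_i=y^{(i)}_i$, $z_j$ = value received from $j$ in Phase 4 for $j\in\mathcal S_0\setminus\{i\}$, $z_j$ = second component of the Phase-1 pair from $j$ for $j\in\mathcal S_1$, set $\boldsymbol w^{(i)}$ to a message $\boldsymbol x$ with $\boldsymbol h_j^{\mathsf T}\boldsymbol x=z_j$ for at least $n-t$ indices $j$ ($\phi$ if none). If $s_i=1$ keep $\boldsymbol w^{(i)}$. Output $\boldsymbol w^{(i)}$ and stop. *)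

(* Defs.v *)
From HB Require Import structures.
From mathcomp Require Import all_boot all_order all_algebra.
Import GRing.Theory.
Local Open Scope ring_scope.

(* Processors [1:n] are represented by 'I_n (processor i+1 <-> ordinal i).
   Field elements identified with integers: alpha m is the field element of
   the integer m+1 (0-based); the first k of them are the interpolation
   nodes [1:k]. *)

Definition cool_k (t : nat) : nat := (t %/ 5 + 1)%N.

(* c = ceil(max{l, (t/5+1) log2(n+1)} / k) is the least natural number c
   with k*c >= l and k*c >= (t+5)/5 * log2(n+1), the latter being
   equivalent to (n+1)^(t+5) <= 2^(5 k c). *)
Definition cool_c_ok (n t l c : nat) : bool :=
  (l <= cool_k t * c)%N && ((n.+1) ^ (t + 5) <= 2 ^ (5 * (cool_k t * c)))%N.

Definition is_cool_c (n t l c : nat) : Prop :=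
  cool_c_ok n t l c /\ (forall c', cool_c_ok n t l c' -> (c <= c')%N).

(* Encoding of an l-bit message, zero padded to k*c bits, as a vector of
   k blocks of c bits, each block viewed as an element of GF(2^c) via toF. *)
Definition cool_enc (t l c : nat) (F : Type) (toF : c.-tuple bool -> F)
  (m : l.-tuple bool) : 'rV[F]_(cool_k t) :=
  \row_(q < cool_k t) toF [tuple nth false m (q * c + r) | r < c].

(* Adversary: for a dishonest sender j and a receiver i, the messages it
   sends to i in each phase (missing messages = a default value). *)
Record adversary (n : nat) (F : Type) := Adversary {
  adv1  : 'I_n -> 'I_n -> F * F;
  adv1c : 'I_n -> 'I_n -> bool;
  adv2  : 'I_n -> 'I_n -> option bool;  (* Phase 2 (None = nothing sent) *)
  adv3  : 'I_n -> 'I_n -> option bool;  (* Phase 3 (None = nothing sent) *)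
  adv4  : 'I_n -> 'I_n -> F
}.

Arguments adv1 {n F}. Arguments adv1c {n F}. Arguments adv2 {n F}.
Arguments adv3 {n F}. Arguments adv4 {n F}.

Section COOL.
Variables (n t : nat) (F : fieldType) (alpha : nat -> F).
Let k := cool_k t.

Definition hcoef (i : nat) (j : 'I_k) : F :=
  \prod_(p < k | p != j) ((alpha i - alpha p) / (alpha j - alpha p)).

Definition heval (i : nat) (x : 'rV[F]_k) : F :=
  \sum_(q < k) hcoef i q * x 0 q.

Variables (D : {set 'I_n})                 (* dishonest processors *)
          (w0 : 'I_n -> 'rV[F]_k)         (* initial (encoded) messages *)
          (adv : adversary n F)
          (maj : seq F -> F)               (* most-frequent value, fixed tie-breaking *)
          (dec : ('I_n -> F) -> option 'rV[F]_k) (* Phase 4 decoder; None = phi *)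
          (d : bool).                      (* decision of the BA protocol *)

Definition y (i : 'I_n) (j : 'I_n) : F := heval j (w0 i).

Definition recv1 (i j : 'I_n) : F * F :=
  if j \in D then adv1 adv j i else (y j i, y j j).

Definition u1 (i j : 'I_n) : bool :=
  if j == i then true else recv1 i j == (y i i, y i j).
Definition s1 (i : 'I_n) : bool := (n - t <= \sum_(j < n) u1 i j)%N.

Definition rec1 (i j : 'I_n) : bool :=
  if j == i then s1 i else if j \in D then adv1c adv j i else s1 j.

Definition u2 (i j : 'I_n) : bool := if s1 i then u1 i j && rec1 i j else u1 i j.
Definition s2 (i : 'I_n) : bool := s1 i && (n - t <= \sum_(j < n) u2 i j)%N.
Definition rec2 (i j : 'I_n) : bool :=
  if j == i then s2 i
  else if j \in D then (if adv2 adv j i is Some b then b else rec1 i j)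
  else if s1 j && ~~ s2 j then false else rec1 i j.

Definition u3 (i j : 'I_n) : bool := if s2 i then u2 i j && rec2 i j else u2 i j.
Definition s3 (i : 'I_n) : bool := s2 i && (n - t <= \sum_(j < n) u3 i j)%N.
Definition rec3 (i j : 'I_n) : bool :=
  if j == i then s3 i
  else if j \in D then (if adv3 adv j i is Some b then b else rec2 i j)
  else if s2 j && ~~ s3 j then false else rec2 i j.

Definition vote (i : 'I_n) : bool := (2 * t + 1 <= \sum_(j < n) rec3 i j)%N.

(* Phase 4: updated y^{(i)}_i of a processor with s_i = 0. *)
Definition ymaj (i : 'I_n) : F :=
  maj [seq (recv1 i j).1 | j <- enum 'I_n & rec3 i j].

(* Phase 4 value received by i from j (honest j sends iff s_j = 0 and
   i is in its S_0 \ {j}; otherwise default 0). *)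
Definition recv4 (i j : 'I_n) : F :=
  if j \in D then adv4 adv j i
  else if ~~ s3 j && ~~ rec3 j i && (i != j) then ymaj j else 0.

Definition zval (i j : 'I_n) : F :=
  if j == i then ymaj i
  else if rec3 i j then (recv1 i j).2 else recv4 i j.

(* Output of processor i (None = phi). *)
Definition cool_output (i : 'I_n) : option 'rV[F]_k :=
  if ~~ d then None
  else if s3 i then Some (w0 i)
  else dec (zval i).

End COOL.

Definition decoder_spec (n t : nat) (F : fieldType) (alpha : nat -> F)
  (dec : ('I_n -> F) -> option 'rV[F]_(cool_k t)) : Prop :=
  forall z : 'I_n -> F,
    match dec z return Prop with
    | Some x => (n - t <= \sum_(j < n) (@heval t F alpha j x == z j))%N
    | None => forall x, (\sum_(j < n) (@heval t F alpha j x == z j) < n - t)%N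
    end.

Definition majority_spec (F : eqType) (maj : seq F -> F) : Prop :=
  forall (s : seq F) (v : F), (count_mem v s <= count_mem (maj s) s)%N.

Definition ba_spec (n : nat) (D : {set 'I_n}) (vote : 'I_n -> bool) (d : bool)
  : Prop :=
  forall b, (forall i, i \notin D -> vote i = b) -> d = b.

(* Main.v *)
Require Import Defs.
From mathcomp Require Import all_boot all_order all_algebra zify.
Import GRing.Theory.
Section RootsS.
Local Open Scope ring_scope.


Variables (n t : nat) (F : fieldType) (alpha : nat -> F).
Hypothesis Hkn : (cool_k t <= n)%N.
Hypothesis Hinj : forall a b : nat, (a < n)%N -> (b < n)%N -> alpha a = alpha b -> a = b.
Local Notation k := (cool_k t).

Lemma alpha_neq (p q : 'I_k) : p != q -> alpha p - alpha q != 0.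
Proof.
move=> pq; rewrite subr_eq0; apply/eqP=> /Hinj.
have hp := leq_trans (ltn_ord p) Hkn; have hq := leq_trans (ltn_ord q) Hkn.
by move=> /(_ hp hq) /val_inj /eqP; rewrite (negbTE pq).
Qed.

Lemma heval_node (q : 'I_k) (x : 'rV[F]_k) : heval t F alpha q x = x 0 q.
Proof.
rewrite /heval (bigD1 q) //= big1 ?addr0.
  rewrite /hcoef big1 ?mul1r // => p pq; rewrite divff //.
  by apply: alpha_neq; rewrite eq_sym.
move=> q' q'q; rewrite /hcoef (bigD1 q) /=; last by rewrite eq_sym.
by rewrite subrr !mul0r.
Qed.

Lemma heval_sub l (a b : 'rV[F]_k) :
  heval t F alpha l (a - b) = heval t F alpha l a - heval t F alpha l b.
Proof.
rewrite /heval -sumrB; apply: eq_bigr => q _; by rewrite !mxE mulrBr.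
Qed.

Definition Lpoly (x : 'rV[F]_k) : {poly F} :=
  \sum_(q < k) (x 0 q * \prod_(p < k | p != q) (alpha q - alpha p)^-1)
     *: \prod_(p < k | p != q) ('X - (alpha p)%:P).

Lemma horner_Lpoly x l : (Lpoly x).[alpha l] = heval t F alpha l x.
Proof.
rewrite /Lpoly horner_sum /heval; apply: eq_bigr => q _.
rewrite hornerZ horner_prod /hcoef big_split /=.
rewrite [X in _ * X](eq_bigr (fun i : 'I_k => alpha l - alpha i)); last by move=> i _; rewrite hornerXsubC.
by rewrite mulrC [x 0 q * _]mulrC mulrA.
Qed.

Lemma size_Lpoly x : (size (Lpoly x) <= k)%N.
Proof.
rewrite /Lpoly; apply: leq_trans (size_sum _ _ _) _.
apply/bigmax_leqP => q _; apply: leq_trans (size_scale_leq _ _) _.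
rewrite size_prod; last by move=> p _; rewrite polyXsubC_eq0.
under eq_bigr do rewrite size_XsubC.
rewrite sum_nat_const cardC1 card_ord.
case: k q => [|m] q; first by case: q.
rewrite /=; lia.
Qed.

Lemma root_bound (a b : 'rV[F]_k) : a != b ->
  (#|[set l : 'I_n | heval t F alpha l a == heval t F alpha l b]| < k)%N.
Proof.
move=> ab; set Z := [set l | _].
rewrite ltnNge; apply/negP => HZ.
pose x := a - b.
have Px0 : Lpoly x = 0.
  apply/eqP; apply: contraT => Pn0.
  have := @max_poly_roots _ (Lpoly x) [seq alpha (val l) | l <- enum Z] Pn0.
  rewrite size_map -cardE => H.
  have : (#|Z| < k)%N.
    apply: (leq_trans _ (size_Lpoly x)); apply: H.
    - apply/allP => _ /mapP [l lZ ->]; rewrite /root horner_Lpoly heval_sub.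
      by move: lZ; rewrite mem_enum inE subr_eq0.
    - rewrite map_inj_in_uniq ?enum_uniq // => l1 l2 _ _ /Hinj e.
      by apply: val_inj; exact: (e (ltn_ord _) (ltn_ord _)).
  by rewrite ltnNge HZ.
apply: (negP ab); rewrite -subr_eq0.
apply/eqP/rowP => q; rewrite !mxE.
have := horner_Lpoly x q; rewrite Px0 horner0 heval_node /x !mxE => <-.
by [].
Qed.


End RootsS.

Lemma sum_card {n} (f : pred 'I_n) : (\sum_(j < n) f j = #|[set j | f j]|)%N.
Proof. rewrite -sum1dep_card [RHS]big_mkcond /=. apply: eq_bigr => i _. by case: (f i). Qed.

Lemma card_split {n} (D : {set 'I_n}) (f : pred 'I_n) :
  (#|[set j | f j]| <= #|D| + #|[set j | (j \notin D) && f j]|)%N.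
Proof.
rewrite -(cardsID D [set j | f j]) leq_add //.
  by apply: subset_leq_card; apply: subsetIr.
apply: subset_leq_card; apply/subsetP => j; rewrite !inE => /andP[-> ->].
by [].
Qed.

Lemma card3 {T : finType} (A B C : {set T}) :
  (#|A| + #|B| + #|C| <= #|A :|: B :|: C| + #|A :&: B| + #|A :&: C| + #|B :&: C|)%N.
Proof.
have h1 := cardsUI A B.
have h2 := cardsUI (A :|: B) C.
have h3 := cardsUI (A :&: C) (B :&: C).
rewrite setIUl in h2.
lia.
Qed.

Lemma k_small t : (5 * (cool_k t - 1) <= t)%N.
Proof. rewrite /cool_k addnK mulnC; exact: leq_trunc_div. Qed.

Section Main.
Variables (n t : nat) (F : fieldType) (alpha : nat -> F)
  (D : {set 'I_n}) (w0 : 'I_n -> 'rV[F]_(cool_k t)) (adv : adversary n F).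
Hypothesis Hn : (3 * t + 1 <= n)%N.
Hypothesis HD : (#|D| <= t)%N.
Hypothesis Hinj : forall a b : nat, (a < n)%N -> (b < n)%N -> alpha a = alpha b -> a = b.

Local Notation k := (cool_k t).
Local Notation hv l x := (heval t F alpha l x).
Local Notation S1 := (s1 n t F alpha D w0 adv).
Local Notation S2 := (s2 n t F alpha D w0 adv).
Local Notation S3 := (s3 n t F alpha D w0 adv).
Local Notation R1 := (rec1 n t F alpha D w0 adv).
Local Notation R2 := (rec2 n t F alpha D w0 adv).
Local Notation R3 := (rec3 n t F alpha D w0 adv).
Local Notation U1 := (u1 n t F alpha D w0 adv).

Lemma Hkn : (k <= n)%N.
Proof. have := k_small t; lia. Qed.

Lemma rootb {a b : 'rV[F]_k} : a != b ->
  (#|[set l : 'I_n | hv l a == hv l b]| < k)%N.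
Proof. move=> ab. exact: (@root_bound n t F alpha Hkn Hinj a b ab). Qed.

Lemma s2_s1 {i} : S2 i -> S1 i.
Proof. by rewrite /s2 => /andP[]. Qed.
Lemma s3_s2 {i} : S3 i -> S2 i.
Proof. by rewrite /s3 => /andP[]. Qed.

Lemma rec1_h i j : j \notin D -> R1 i j = S1 j.
Proof. by move=> hj; rewrite /rec1; case: eqP => [->|_] //; rewrite (negbTE hj). Qed.

Lemma rec2_h i j : j \notin D -> R2 i j = S2 j.
Proof.
move=> hj; rewrite /rec2; case: eqP => [->|_] //; rewrite (negbTE hj) rec1_h //.
case E1: (S1 j); case E2: (S2 j) => //=.
by have := s2_s1 E2; rewrite E1.
Qed.

Lemma rec3_h i j : j \notin D -> R3 i j = S3 j.
Proof.
move=> hj; rewrite /rec3; case: eqP => [->|_] //; rewrite (negbTE hj) rec2_h //.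
case E1: (S2 j); case E2: (S3 j) => //=.
by have := s3_s2 E2; rewrite E1.
Qed.

Definition E (i j : 'I_n) := (j == i) || ((hv i (w0 j) == hv i (w0 i)) && (hv j (w0 j) == hv j (w0 i))).

Lemma u1_h i j : j \notin D -> U1 i j = E i j.
Proof.
move=> hj; rewrite /u1 /E; case: eqP => // _ /=.
by rewrite /recv1 (negbTE hj) xpair_eqE /y.
Qed.

Definition M := (n - t - #|D|)%N.

Lemma deg1 {i} : S1 i -> (M <= #|[set j | (j \notin D) && E i j]|)%N.
Proof.
rewrite /s1 sum_card => h.
have := card_split D (fun j => U1 i j).
have -> : [set j | (j \notin D) && U1 i j] = [set j | (j \notin D) && E i j].
  by apply/setP => j; rewrite !inE; case: (boolP (j \in D)) => //= hj; rewrite u1_h.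
rewrite /M; lia.
Qed.

Lemma deg2 {i} : S2 i -> (M <= #|[set j | (j \notin D) && E i j && S1 j]|)%N.
Proof.
move=> h2; have h1 := s2_s1 h2; move: h2.
rewrite /s2 h1 /= sum_card => h.
have := card_split D (fun j => u2 n t F alpha D w0 adv i j).
have -> : [set j | (j \notin D) && u2 n t F alpha D w0 adv i j] =
          [set j | (j \notin D) && E i j && S1 j].
  apply/setP => j; rewrite !inE /u2 h1; case: (boolP (j \in D)) => //= hj.
  by rewrite u1_h // rec1_h.
move=> h'; rewrite /M leq_subLR; exact: leq_trans h h'.
Qed.

Lemma deg3 {i} : S3 i -> (M <= #|[set j | (j \notin D) && E i j && S1 j && S2 j]|)%N.
Proof.
move=> h3; have h2 := s3_s2 h3; have h1 := s2_s1 h2; move: h3.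
rewrite /s3 h2 /= sum_card => h.
have := card_split D (fun j => u3 n t F alpha D w0 adv i j).
have -> : [set j | (j \notin D) && u3 n t F alpha D w0 adv i j] =
          [set j | (j \notin D) && E i j && S1 j && S2 j].
  apply/setP => j; rewrite !inE /u3 /u2 h1 h2; case: (boolP (j \in D)) => //= hj.
  by rewrite u1_h // rec1_h // rec2_h.
move=> h'; rewrite /M leq_subLR; exact: leq_trans h h'.
Qed.


Lemma cardCD : (#|~: D| = n - #|D|)%N.
Proof. have := cardsC D; rewrite card_ord; lia. Qed.

Lemma two_msgs i1 i2 i3 : i1 \notin D -> i2 \notin D -> i3 \notin D ->
  S1 i1 -> S1 i2 -> S1 i3 ->
  w0 i1 != w0 i2 -> w0 i1 != w0 i3 -> w0 i2 != w0 i3 -> False.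
Proof.
move=> _ _ _ s1 s2 s3 n12 n13 n23.
pose X (m : 'rV[F]_k) := [set l | (l \notin D) && (hv l m == hv l (w0 l))].
have HX : forall i, S1 i -> (M <= #|X (w0 i)|)%N.
  move=> i hi; apply: leq_trans (deg1 hi) _; apply: subset_leq_card.
  apply/subsetP => j; rewrite !inE /E => /andP[-> /orP[/eqP->|/andP[_ /eqP->]]] //=.
have HI : forall a b, a != b -> (#|X a :&: X b| < k)%N.
  move=> a b ab; apply: leq_ltn_trans (rootb ab); apply: subset_leq_card.
  apply/subsetP => l; rewrite !inE => /andP[/andP[_ /eqP ea] /andP[_ /eqP eb]].
  by rewrite ea eb.
have HU : (#|X (w0 i1) :|: X (w0 i2) :|: X (w0 i3)| <= #|~: D|)%N.
  apply: subset_leq_card; apply/subsetP => l; rewrite !inE.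
  by case/orP => [/orP[]|] /andP[->].
have := card3 (X (w0 i1)) (X (w0 i2)) (X (w0 i3)).
have := HX _ s1; have := HX _ s2; have := HX _ s3.
have := HI _ _ n12; have := HI _ _ n13; have := HI _ _ n23.
move: HU; rewrite cardCD /M.
have := k_small t; lia.
Qed.

Lemma cross {a b x y} : a != b -> w0 x = a -> w0 y = b -> E x y ->
  (hv x a == hv x b) && (hv y a == hv y b).
Proof.
move=> ab wx wy; rewrite /E; case/orP => [/eqP yx|/andP[/eqP e1 /eqP e2]].
  by move: ab; rewrite -wx -wy yx eqxx.
by move: e1 e2; rewrite wx wy => -> ->; rewrite !eqxx.
Qed.

Section AB.
Variables (a b : 'rV[F]_k).
Hypothesis Hab : a != b.
Hypothesis Hall : forall l, l \notin D -> S1 l -> (w0 l == a) || (w0 l == b).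
Let Z := [set l : 'I_n | hv l a == hv l b].

Lemma stepQ y : y \notin D -> S2 y -> w0 y = a -> y \notin Z ->
  (M <= #|[set l | (l \notin D) && S1 l && (w0 l == a)]|)%N.
Proof.
move=> hy s2y wy yZ; apply: leq_trans (deg2 s2y) _; apply: subset_leq_card.
apply/subsetP => j; rewrite !inE => /andP[/andP[hj Eyj] s1j]; rewrite hj s1j /=.
case/orP: (Hall _ hj s1j) => // /eqP wj.
by have := cross Hab wy wj Eyj; case/andP => h _; move: yZ; rewrite inE h.
Qed.

Lemma stepP x : x \notin D -> S3 x -> w0 x = a ->
  exists2 y, (y \notin D) && S2 y && (w0 y == a) & y \notin Z.
Proof.
move=> hx s3x wx; case: (boolP (x \in Z)) => xZ; last first.
  by exists x => //; rewrite hx (s3_s2 s3x) wx eqxx.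
case: (pickP [pred y | (y \notin D) && S2 y && (w0 y == a) && (y \notin Z)]).
  by move=> y /andP[h1 h2]; exists y.
move=> none; exfalso.
have : (M <= #|Z|)%N.
  apply: leq_trans (deg3 s3x) _; apply: subset_leq_card.
  apply/subsetP => j; rewrite !inE => /andP[/andP[/andP[hj Exj] s1j] s2j].
  case/orP: (Hall _ hj s1j) => /eqP wj.
    by have := none j; rewrite /= hj s2j wj eqxx /= inE => /negbFE.
  by have := cross Hab wx wj Exj; case/andP.
move=> hM; have hZ : (#|Z| < k)%N := rootb Hab; move: hM hZ; rewrite /M; have := k_small t; lia.
Qed.

End AB.

Lemma s3_uniq i j : i \notin D -> j \notin D -> S3 i -> S3 j -> w0 i = w0 j.
Proof.
move=> hi hj s3i s3j; case: (eqVneq (w0 i) (w0 j)) => // ne; exfalso.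
have Hall : forall l, l \notin D -> S1 l -> (w0 l == w0 i) || (w0 l == w0 j).
  move=> l hl s1l; apply/negPn/negP; rewrite negb_or => /andP[n1 n2].
  apply: (two_msgs i j l hi hj hl (s2_s1 (s3_s2 s3i)) (s2_s1 (s3_s2 s3j)) s1l ne).
    by rewrite eq_sym.
  by rewrite eq_sym.
have Hall' : forall l, l \notin D -> S1 l -> (w0 l == w0 j) || (w0 l == w0 i).
  by move=> l hl s1l; rewrite orbC Hall.
have ne' : w0 j != w0 i by rewrite eq_sym.
have [y /andP[/andP[hy s2y] /eqP wy] yZ] := stepP (w0 i) (w0 j) ne Hall i hi s3i erefl.
have [z /andP[/andP[hz s2z] /eqP wz] zZ] := stepP (w0 j) (w0 i) ne' Hall' j hj s3j erefl.
have hA := stepQ (w0 i) (w0 j) ne Hall y hy s2y wy yZ.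
have hB := stepQ (w0 j) (w0 i) ne' Hall' z hz s2z wz zZ.
set A := [set l | _ && _ && (w0 l == w0 i)] in hA.
set B := [set l | _ && _ && (w0 l == w0 j)] in hB.
have hU : (#|A :|: B| <= #|~: D|)%N.
  apply: subset_leq_card; apply/subsetP => l; rewrite !inE.
  by case/orP => /andP[/andP[-> _] _].
have hI : A :&: B = set0.
  apply/setP => l; rewrite !inE; apply/negP => /andP[/andP[_ /eqP e1] /andP[_ /eqP e2]].
  by move: ne; rewrite -e1 -e2 eqxx.
have e := cardsUI A B; rewrite hI cards0 addn0 in e; rewrite e cardCD in hU.
have := leq_add hA hB; move/leq_trans/(_ hU); rewrite /M; lia.
Qed.


Variables (maj : seq F -> F) (dec : ('I_n -> F) -> option 'rV[F]_k) (d : bool).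
Hypothesis Hmaj : majority_spec F maj.
Hypothesis Hdec : decoder_spec n t F alpha dec.
Hypothesis Hd : ba_spec n D (vote n t F alpha D w0 adv) d.

Local Notation RV1 := (recv1 n t F alpha D w0 adv).
Local Notation YM := (ymaj n t F alpha D w0 adv maj).

Lemma recv1_h m j : j \notin D -> RV1 m j = (hv m (w0 j), hv j (w0 j)).
Proof. by move=> hj; rewrite /recv1 (negbTE hj). Qed.

Lemma all_out : d -> exists ws, forall i, i \notin D ->
  cool_output n t F alpha D w0 adv maj dec d i = Some ws.
Proof.
move=> dT.
have [i0 hi0 v0] : exists2 i0, i0 \notin D & vote n t F alpha D w0 adv i0.
  case: (pickP [pred i | (i \notin D) && vote n t F alpha D w0 adv i]).
    by move=> i0 /andP[h v]; exists i0.
  move=> none; have := Hd false; rewrite dT => H; exfalso; suff: true = false by [].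
  apply: H => i hi; have := none i; by rewrite /= hi.
pose S3H := [set j | (j \notin D) && S3 j].
have hS3 : (t + 1 <= #|S3H|)%N.
  move: v0; rewrite /vote sum_card => v0.
  have := leq_trans v0 (card_split D (fun j => R3 i0 j)).
  have -> : [set j | (j \notin D) && R3 i0 j] = S3H.
    by apply/setP => j; rewrite !inE; case: (boolP (j \in D)) => //= hj; rewrite rec3_h.
  lia.
have : S3H != set0 by rewrite -card_gt0; lia.
case/set0Pn => z; rewrite inE => /andP[hz s3z].
exists (w0 z).
have huniq : forall l, l \notin D -> S3 l -> w0 l = w0 z.
  by move=> l hl s3l; apply: s3_uniq.
have hymaj : forall m, YM m = hv m (w0 z).
  move=> m; rewrite /ymaj; set s := [seq _ | _ <- _].
  have cnt : forall v, count_mem v s = #|[set j | R3 m j && ((RV1 m j).1 == v)]|.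
    move=> v; rewrite /s count_map count_filter -sum1_count big_enum_cond /= sum1dep_card.
    by apply: eq_card => j; rewrite !inE /= andbC.
  have c1 : (t + 1 <= count_mem (hv m (w0 z)) s)%N.
    rewrite cnt; apply: leq_trans hS3 _; apply: subset_leq_card; apply/subsetP => j.
    rewrite !inE => /andP[hj s3j]; rewrite rec3_h // s3j recv1_h //= huniq //.
  have := Hmaj s (hv m (w0 z)).
  case: (eqVneq (maj s) (hv m (w0 z))) => // ne.
  have c2 : (count_mem (maj s) s <= #|D|)%N.
    rewrite cnt; apply: subset_leq_card; apply/subsetP => j; rewrite !inE.
    case: (boolP (j \in D)) => // hj; rewrite rec3_h // recv1_h //= => /andP[s3j /eqP e].
    by move: ne; rewrite -e huniq // eqxx.
  lia.
have hzv : forall i, i \notin D -> ~~ S3 i -> forall j, j \notin D ->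
    zval n t F alpha D w0 adv maj i j = hv j (w0 z).
  move=> i hi ns3 j hj; rewrite /zval; case: eqP => [->|ne]; first exact: hymaj.
  rewrite rec3_h //; case: (boolP (S3 j)) => s3j.
    by rewrite recv1_h //= huniq.
  rewrite /recv4 (negbTE hj) s3j rec3_h // (negbTE ns3) /=.
  have -> : (i != j) by apply/eqP => e; apply: ne; rewrite e.
  exact: hymaj.
move=> i hi; rewrite /cool_output dT /=.
case: (boolP (S3 i)) => s3i; first by rewrite huniq.
have := Hdec (zval n t F alpha D w0 adv maj i).
case: (dec _) => [x|] H.
  congr Some; apply/eqP; apply: contraT => nx.
  have hr := rootb nx.
  move: H; rewrite sum_card => H.
  have H1 := leq_trans H (card_split D _).
  have hsub : ([set j | (j \notin D) && (hv j x == zval n t F alpha D w0 adv maj i j)]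
     \subset [set l : 'I_n | hv l x == hv l (w0 z)]).
    apply/subsetP => j; rewrite !inE => /andP[hj /eqP e]; by rewrite e hzv.
  have hS := leq_ltn_trans (subset_leq_card hsub) hr.
  have H2 := leq_trans H1 (leq_add HD (leqnn _)).
  have H3 : (n - t < t + k)%N.
    apply: (leq_ltn_trans H2); by rewrite ltn_add2l.
  have := k_small t; lia.
have H' := H (w0 z); rewrite sum_card in H'.
have hsub : ~: D \subset [set j : 'I_n | hv j (w0 z) == zval n t F alpha D w0 adv maj i j].
  by apply/subsetP => j; rewrite !inE => hj; rewrite hzv.
have := leq_ltn_trans (subset_leq_card hsub) H'; rewrite cardCD; lia.
Qed.

End Main.

Theorem lemma4
  (n t l c : nat) (F : finFieldType)
  (Hn : (3 * t + 1 <= n)%N)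
  (Hc : is_cool_c n t l c)
  (HF : #|F| = (2 ^ c)%N)
  (toF : c.-tuple bool -> F) (HtoF : bijective toF)
  (alpha : nat -> F)
  (Halpha_inj : forall a b : nat, (a < n)%N -> (b < n)%N -> alpha a = alpha b -> a = b)
  (Halpha_nz : forall a : nat, (a < n)%N -> alpha a != 0%R)
  (msg : 'I_n -> l.-tuple bool)
  (D : {set 'I_n}) (HD : (#|D| <= t)%N)
  (adv : adversary n F)
  (maj : seq F -> F) (Hmaj : majority_spec F maj)
  (dec : ('I_n -> F) -> option 'rV[F]_(cool_k t))
  (Hdec : decoder_spec n t F alpha dec)
  (d : bool)
  (Hd : ba_spec n D (vote n t F alpha D (fun i => cool_enc t l c F toF (msg i)) adv) d) :
  forall i j : 'I_n, i \notin D -> j \notin D ->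
    cool_output n t F alpha D (fun i => cool_enc t l c F toF (msg i)) adv maj dec d i =
    cool_output n t F alpha D (fun i => cool_enc t l c F toF (msg i)) adv maj dec d j.
Proof.
move=> i j hi hj.
case: (boolP d) => dT; last by rewrite /cool_output.
have [ws Hws] := @all_out n t F alpha D (fun i => cool_enc t l c F toF (msg i)) adv
  Hn HD Halpha_inj maj dec d Hmaj Hdec Hd dT.
by move: (Hws i hi) (Hws j hj); rewrite dT => -> ->.
Qed.
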